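(* Let $M$ and $M'$ be sets of equatorial measurement angles in $[0,\pi)$ with $|M|,|M'|\ge2$, and let $U$ be a single-qubit unitary such that $UMU^\dagger=M'$ modulo $\pi$, i.e. for every $\varphi\in M$ there is $\varphi'$ with $UE_\varphi U^\dagger=\pm E_{\varphi'}$, and $\{\varphi'\bmod\pi:\varphi\in M\}=M'$. Then, up to a global phase, $U=X^aP_\theta$ for some $\theta\in[0,2\pi)$ and $a\in\{0,1\}$, where $P_\theta=\mathrm{diag}(1,e^{i\theta})$ is the phase gate.
   Context: For $\varphi\in\mathbb{R}$, the equatorial measurement with angle $\varphi$ is the observable $E_\varphi=\cos\varphi\,X+\sin\varphi\,Y$, where $X,Y$ are Pauli matrices; note $E_{\varphi+\pi}=-E_\varphi$. *)

(* Defs.v *)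
From HB Require Import structures.
From mathcomp Require Import all_boot all_order all_algebra.
From mathcomp Require Import complex.
From mathcomp Require Import all_classical all_reals all_analysis.
Set Implicit Arguments. Unset Strict Implicit. Unset Printing Implicit Defensive.
Import Order.TTheory GRing.Theory Num.Theory.
Local Open Scope ring_scope.
Local Open Scope complex_scope.

Section Defs.
Variable R : realType.
Local Notation C := R[i].

Definition pauliX : 'M[C]_2 := \matrix_(i < 2, j < 2) (if i != j then 1 else 0).
Definition pauliY : 'M[C]_2 :=
  \matrix_(i < 2, j < 2)
    (if (i == 0 :> nat) && (j == 1 :> nat) then - 'i
     else if (i == 1 :> nat) && (j == 0 :> nat) then 'i else 0).

Definition equat (phi : R) : 'M[C]_2 :=
  (cos phi)%:C *: pauliX + (sin phi)%:C *: pauliY.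

Definition adjmx (A : 'M[C]_2) : 'M[C]_2 := (map_mx (fun z => z^*) A)^T.

Definition qubit_unitary (U : 'M[C]_2) : Prop := U *m adjmx U = 1%:M.

Definition expi (t : R) : C := (cos t +i* sin t).

Definition phase_gate (t : R) : 'M[C]_2 :=
  \matrix_(i < 2, j < 2)
    (if i != j then 0 else if (i == 0 :> nat) then 1 else expi t).

Definition modpi (x : R) : R := x - pi * (Num.floor (x / pi))%:~R.
End Defs.

(* Main.v *)
Require Import Defs.
From HB Require Import structures.
From mathcomp Require Import all_boot all_order all_algebra.
From mathcomp Require Import complex ring lra.
From mathcomp Require Import all_classical all_reals all_analysis.
Import Order.TTheory GRing.Theory Num.Theory.
Local Open Scope ring_scope.
Local Open Scope complex_scope.

Lemma lift01 : lift ord0 ord0 = 1 :> 'I_2. Proof. exact: val_inj. Qed.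

Lemma entry00 (R : realType) (U : 'M[R[i]]_2) phi :
  (U *m equat phi *m adjmx U) 0 0 =
  U 0 1 * (cos phi +i* sin phi) * (U 0 0)^* + U 0 0 * (cos phi -i* sin phi) * (U 0 1)^*.
Proof.
rewrite /equat /adjmx /pauliX /pauliY !(mxE, big_ord_recl, big_ord0) /= lift01.
move: (U 0 0) (U 0 1) => [a1 a2] [b1 b2].
rewrite /GRing.scale /=. simpc.
apply/eqP; rewrite eq_complex /=; apply/andP; split; apply/eqP; ring.
Qed.

Lemma entry11 (R : realType) (U : 'M[R[i]]_2) phi :
  (U *m equat phi *m adjmx U) 1 1 =
  U 1 1 * (cos phi +i* sin phi) * (U 1 0)^* + U 1 0 * (cos phi -i* sin phi) * (U 1 1)^*.
Proof.
rewrite /equat /adjmx /pauliX /pauliY !(mxE, big_ord_recl, big_ord0) /= lift01.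
move: (U 1 0) (U 1 1) => [a1 a2] [b1 b2].
rewrite /GRing.scale /=. simpc.
apply/eqP; rewrite eq_complex /=; apply/andP; split; apply/eqP; ring.
Qed.

Lemma equat_diag (R : realType) t : equat t 0 0 = 0 :> R[i] /\ equat t 1 1 = 0.
Proof. by rewrite /equat /pauliX /pauliY !mxE /= !mulr0 addr0. Qed.

Lemma unit_entries (R : realType) (U : 'M[R[i]]_2) : qubit_unitary U ->
  U 0 0 * (U 0 0)^* + U 0 1 * (U 0 1)^* = 1 /\
  U 1 0 * (U 0 0)^* + U 1 1 * (U 0 1)^* = 0 /\
  U 1 0 * (U 1 0)^* + U 1 1 * (U 1 1)^* = 1.
Proof.
move=> HU; have E i j : (U *m adjmx U) i j = (1%:M : 'M[R[i]]_2) i j by rewrite HU.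
move: (E 0 0) (E 1 0) (E 1 1).
rewrite /adjmx !(mxE, big_ord_recl, big_ord0) /= lift01 !addr0 => -> -> ->.
done.
Qed.

Lemma key_lin (R : realType) (x y c1 s1 c2 s2 : R) :
  x*c1 - y*s1 = 0 -> x*c2 - y*s2 = 0 -> s1*c2 - c1*s2 != 0 -> x = 0 /\ y = 0.
Proof.
move=> h1 h2 hD.
have ex : x * (s1*c2 - c1*s2) = 0.
  have -> : x * (s1*c2 - c1*s2) = s1*(x*c2 - y*s2) - s2*(x*c1 - y*s1) by ring.
  by rewrite h1 h2 !mulr0 subr0.
have ey : y * (s1*c2 - c1*s2) = 0.
  have -> : y * (s1*c2 - c1*s2) = c1*(x*c2 - y*s2) - c2*(x*c1 - y*s1) by ring.
  by rewrite h1 h2 !mulr0 subr0.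
move/eqP: ex; move/eqP: ey; rewrite !mulf_eq0 (negPf hD) !orbF => /eqP -> /eqP ->.
by [].
Qed.

Lemma sin_diff_neq0 (R : realType) (p1 p2 : R) :
  0 <= p1 < pi -> 0 <= p2 < pi -> p1 <> p2 -> sin p1 * cos p2 - cos p1 * sin p2 != 0.
Proof.
move=> /andP[h1 h1'] /andP[h2 h2'] hne; rewrite -sinB.
case: (ltgtP p1 p2) => h.
- rewrite -oppr_eq0 -sinN opprB; apply/lt0r_neq0/sin_gt0_pi; apply/andP; split; lra.
- apply/lt0r_neq0/sin_gt0_pi; apply/andP; split; lra.
- by exfalso; apply: hne.
Qed.

Lemma re_zero (R : realType) (a b : R[i]) (p1 p2 : R) :
  0 <= p1 < pi -> 0 <= p2 < pi -> p1 <> p2 ->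
  b * (cos p1 +i* sin p1) * a^* + a * (cos p1 -i* sin p1) * b^* = 0 ->
  b * (cos p2 +i* sin p2) * a^* + a * (cos p2 -i* sin p2) * b^* = 0 ->
  b * a^* = 0.
Proof.
move=> h1 h2 hne.
have hD := @sin_diff_neq0 R _ _ h1 h2 hne.
case: a b => [a1 a2] [b1 b2]; simpc.
move=> /eqP; rewrite eq_complex /= => /andP[/eqP e1 _].
move=> /eqP; rewrite eq_complex /= => /andP[/eqP e2 _].
have := @key_lin R (b1*a1 + b2*a2) (b2*a1 - b1*a2) (cos p1) (sin p1) (cos p2) (sin p2).
case.
- by rewrite -[RHS](mul0r (2^-1)) -e1; field.
- by rewrite -[RHS](mul0r (2^-1)) -e2; field.
- exact: hD.
move=> hx hy; apply/eqP; rewrite eq_complex /= hx; apply/andP; split => //.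
by rewrite -hy; apply/eqP; ring.
Qed.

Lemma norm_one (R : realType) (z : R[i]) : z * z^* = 1 -> `|z| = 1.
Proof.
case: z => x y; simpc => /eqP; rewrite eq_complex /= => /andP[/eqP H _].
by rewrite !expr2 H sqrtr1.
Qed.

Lemma angle (R : realType) (z : R[i]) : z * z^* = 1 ->
  exists t : R, 0 <= t < 2 * pi /\ expi t = z.
Proof.
case: z => x y; simpc => /eqP; rewrite eq_complex /= => /andP[/eqP H _].
have hx : x \in `[-1, 1] by rewrite in_itv /=; apply/andP; split; nra.
have hs : sin (acos x) = `|y| by rewrite sin_acos ?(itvP hx) // -sqrtr_sqr; congr Num.sqrt; lra.
have pi0 := @pi_gt0 R.
case: (lerP 0 y) => hy.
- exists (acos x); split.
    by rewrite acos_ge0 ?(itvP hx) //= (le_lt_trans (acos_lepi _)) ?(itvP hx) //; lra.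
  by rewrite /expi acosK // hs ger0_norm.
- have hx1 : x < 1 by nra.
  exists (pi *+ 2 - acos x); split.
    have := acos_gt0 (x:=x); have := acos_lepi (x:=x).
    rewrite !(itvP hx) hx1 /= => /(_ isT) h1 /(_ isT) h2; rewrite -mulr_natl; lra.
  by rewrite /expi cosB sinB cos2pi sin2pi acosK // hs ltr0_norm // mul1r mul0r; congr (_ +i* _); ring.
Qed.

Lemma conjM (R : realType) (x y : R[i]) : conjc (x * y) = conjc x * conjc y.
Proof. by case: x y => [a b] [c d]; simpc; congr (_ +i* _); ring. Qed.

Lemma conj0 (R : realType) : (0 : R[i])^*%C = 0.
Proof. by rewrite /conjc /= oppr0. Qed.

Lemma unit_prod (R : realType) (x y : R[i]) : x * conjc x = 1 -> y * conjc y = 1 ->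
  (x * conjc y) * conjc (x * conjc y) = 1.
Proof. by move=> hx hy; rewrite conjM conjcK mulrACA hx [conjc y * y]mulrC hy mulr1. Qed.

Lemma ord2P (i : 'I_2) : i = 0 \/ i = 1.
Proof. by case: i => [[|[|//]]] Hi; [left|right]; apply: val_inj. Qed.

Local Close Scope complex_scope.
Local Open Scope classical_set_scope.

Theorem lemma30 (R : realType) (M M' : set R) (U : 'M[R[i]]_2) :
  M `<=` `[0, pi[ -> M' `<=` `[0, pi[ ->
  (exists phi1 phi2, M phi1 /\ M phi2 /\ phi1 <> phi2) ->
  (exists phi1 phi2, M' phi1 /\ M' phi2 /\ phi1 <> phi2) ->
  qubit_unitary U ->
  (exists f : R -> R,
     (forall phi, M phi ->
        U *m equat phi *m adjmx U = equat (f phi) \/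
        U *m equat phi *m adjmx U = - equat (f phi)) /\
     [set modpi (f phi) | phi in M] = M') ->
  exists (c : R[i]) (theta : R) (a : bool),
    `|c| = 1 /\ 0 <= theta < 2 * pi /\
    U = c *: ((if a then pauliX R else 1%:M) *m phase_gate theta).
Proof.
move=> HM _ [p1 [p2 [M1 [M2 hne]]]] _ HU [f [Hf _]].
have I1 : 0 <= p1 < pi by move: (HM _ M1); rewrite /= in_itv.
have I2 : 0 <= p2 < pi by move: (HM _ M2); rewrite /= in_itv.
have D k : M k -> (U *m equat k *m adjmx U) 0 0 = 0 /\ (U *m equat k *m adjmx U) 1 1 = 0.
  move=> Mk.
  by case: (Hf _ Mk) => ->; rewrite ?mxE /= !mulr0 addr0 ?oppr0.
have [D1 D1'] := D _ M1; have [D2 D2'] := D _ M2.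
rewrite entry00 in D1; rewrite entry00 in D2.
rewrite entry11 in D1'; rewrite entry11 in D2'.
have hab : U 0 1 * Num.conj (U 0 0) = 0 by exact: (@re_zero R _ _ _ _ I1 I2 hne D1 D2).
have [u1 [u2 u3]] : U 0 0 * Num.conj (U 0 0) + U 0 1 * Num.conj (U 0 1) = 1 /\ U 1 0 * Num.conj (U 0 0) + U 1 1 * Num.conj (U 0 1) = 0 /\ U 1 0 * Num.conj (U 1 0) + U 1 1 * Num.conj (U 1 1) = 1 by exact: (@unit_entries R U HU).
move: hab u1 u2 u3; set a := U 0 0; set b := U 0 1; set c := U 1 0; set d := U 1 1.
move=> hab u1 u2 u3.
have nz (z : R[i]) : z * Num.conj z = 1 -> Num.conj z != 0.
  by move=> h; apply/negP => /eqP h0; move: h; rewrite h0 mulr0 => /eqP; rewrite eq_sym oner_eq0.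
have ang (z : R[i]) : z * Num.conj z = 1 -> exists t : R, 0 <= t < 2 * pi /\ expi t = z.
  exact: angle.
have nrm (z : R[i]) : z * Num.conj z = 1 -> `|z| = 1 by exact: norm_one.
move/eqP: hab; rewrite mulf_eq0 conjC_eq0 => /orP [/eqP b0 | /eqP a0].
- rewrite b0 conjC0 !mulr0 !addr0 in u1 u2.
  have c0 : c = 0 by move/eqP: u2; rewrite mulf_eq0 (negPf (nz _ u1)) orbF => /eqP.
  rewrite c0 mul0r add0r in u3.
  have hz : d * Num.conj a * Num.conj (d * Num.conj a) = 1.
    exact: unit_prod u3 u1.
  have [t [ht et]] := ang _ hz.
  exists a, t, false; split; first exact: nrm.
  split => //; rewrite mul1mx; apply/matrixP => i j.
  rewrite !mxE; case: (ord2P i) => ->; case: (ord2P j) => -> /=.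
  + by rewrite mulr1.
  + by rewrite mulr0; exact: b0.
  + by rewrite mulr0; exact: c0.
  + by rewrite et; change (d = a * (d * Num.conj a)); rewrite mulrCA u1 mulr1.
- rewrite a0 conjC0 mul0r mulr0 !add0r in u1 u2.
  have d0 : d = 0 by move/eqP: u2; rewrite mulf_eq0 (negPf (nz _ u1)) orbF => /eqP.
  rewrite d0 mul0r addr0 in u3.
  have hz : b * Num.conj c * Num.conj (b * Num.conj c) = 1.
    exact: unit_prod u1 u3.
  have [t [ht et]] := ang _ hz.
  exists c, t, true; split; first exact: nrm.
  split => //; apply/matrixP => i j.
  rewrite !(mxE, big_ord_recl, big_ord0) /= lift01; case: (ord2P i) => ->; case: (ord2P j) => -> /=.
  + by rewrite !(mulr0, mul0r, addr0); exact: a0.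
  + rewrite mul0r mul1r !add0r addr0 et.
    by change (b = c * (b * Num.conj c)); rewrite mulrCA u3 mulr1.
  + by rewrite !(mulr0, mul0r, mulr1, addr0).
  + by rewrite !(mulr0, mul0r, addr0); exact: d0.
Qed.
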